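(* Let $p\ge1$, $\phi_1,\dots,\phi_p:\mathbb Z\to\mathbb C$, and let $H(t,s)$ be the Green's function of $y_t=\sum_{l=1}^p\phi_l(t)y_{t-l}$. Then $H(t,s)=\xi_{t,s}$ for all integers $s$ and $t\ge s-p+1$. In particular, for $t>s$, $H(t,s)$ is the determinant of the $(t-s)\times(t-s)$ banded lower Hessenberg matrix whose $(i,j)$ entry is $-1$ if $j=i+1$, $\phi_{i-j+1}(s+i)$ if $1\le i-j+1\le p$, and $0$ otherwise.
   Context: For $t\in\mathbb Z$ let $\Gamma_t$ be the $p\times p$ companion matrix with first row $(\phi_1(t),\dots,\phi_p(t))$, entries $(i,i-1)$ equal to $1$ for $2\le i\le p$, and all other entries $0$. For $t>s$, $F_{t,s}=\Gamma_t\Gamma_{t-1}\cdots\Gamma_{s+1}$ and the Green's function $H(t,s)$ is the $(1,1)$ entry of $F_{t,s}$; by convention $H(s,s)=1$ and $H(t,s)=0$ for $s-p+1\le t<s$. Convention: $\phi_l=0$ for $l>p$. For $t>s$, $\Phi_{t,s}$ is the $(t-s)\times(t-s)$ matrix with $(i,j)$ entry $-1$ if $j=i+1$, $\phi_{i-j+1}(s+i)$ if $1\le j\le i$, $0$ if $j>i+1$; the principal determinant is $\xi_{t,s}=\det\Phi_{t,s}$ for $t>s$, $\xi_{s,s}=1$, and $\xi_{t,s}=0$ for $s-p+1\le t<s$. *)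

(* Defs.v *)
(* Complex numbers are modelled as R[i] for R : realType. *)
From mathcomp Require Import all_boot all_order all_algebra.
From mathcomp Require Export reals complex.
Set Implicit Arguments. Unset Strict Implicit. Unset Printing Implicit Defensive.
Import Order.TTheory GRing.Theory Num.Theory.
Local Open Scope ring_scope.

Section Green.
Variable C : comNzRingType.
(* order p >= 1; coefficient functions phi l : int -> C for 1 <= l <= p
   (values of phi at l = 0 or l > p are ignored). *)
Variable p : nat.
Variable phi : nat -> int -> C.

Definition phic (l : nat) (t : int) : C :=
  if (1 <= l <= p)%N then phi l t else 0.

(* Companion matrix Gamma_t, of size p (written p.-1.+1, = p since p >= 1).
   0-indexed: row 0 is (phi_1(t), ..., phi_p(t)); entries (i, i-1) are 1. *)
Definition Gamma (t : int) : 'M[C]_(p.-1.+1) :=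
  \matrix_(i, j) (if i == 0%N :> nat then phic j.+1 t
                  else if i == j.+1 :> nat then 1 else 0).

Definition Fmat (t s : int) : 'M[C]_(p.-1.+1) :=
  \prod_(k < `|t - s|%N) Gamma (t - k%:Z).

(* Green's function H(t,s): (1,1) entry of F_{t,s} for t > s; H(s,s) = 1;
   0 for t < s (the paper only specifies s-p+1 <= t < s). *)
Definition Green (t s : int) : C :=
  if s < t then Fmat t s 0 0 else if t == s then 1 else 0.

(* Phi_{t,s}, (t-s) x (t-s); 0-indexed (i,j) corresponds to the paper's
   (i+1, j+1): -1 if j = i+1, phi_{i-j+1}(s+i+1) if j <= i, 0 otherwise. *)
Definition Phimat (t s : int) : 'M[C]_(`|t - s|%N) :=
  \matrix_(i, j) (if j == i.+1 :> nat then -1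
                  else if (j <= i)%N then phic (i - j).+1 (s + (i.+1)%:Z)
                  else 0).

Definition xi (t s : int) : C :=
  if s < t then \det (Phimat t s) else if t == s then 1 else 0.

End Green.

(* Main.v *)
Require Import Defs.
From mathcomp Require Import all_boot all_order all_algebra.
From mathcomp Require Import reals complex.
From mathcomp Require Import zify ring.
Import Order.TTheory GRing.Theory Num.Theory.
Local Open Scope ring_scope.

Section Hess.
Variable C : comNzRingType.
Variable a : nat -> nat -> C.
Hypothesis a_sup : forall i, a i i.+1 = -1.
Hypothesis a_up : forall i j, (i.+1 < j)%N -> a i j = 0.

Definition Mh n : 'M[C]_n := \matrix_(i < n, j < n) a i j.
Definition Nh n (b : nat -> C) : 'M[C]_n.+1 :=
  \matrix_(i < n.+1, j < n.+1) (if i == n :> nat then b j else a i j).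

Lemma minor_last n b :
  row' ord_max (col' ord_max (Nh n b)) = Mh n.
Proof.
apply/matrixP => i j; rewrite !mxE !lift_max /=.
by rewrite (ltn_eqF (ltn_ord i)).
Qed.

Lemma Nh_det n b : \det (Nh n b) = \sum_(r < n.+1) b r * \det (Mh r).
Proof.
elim: n b => [|m IH] b.
  rewrite (expand_det_col _ ord_max) !big_ord1 /cofactor.
  by rewrite !mxE /= !det_mx00 expr0 !mulr1.
rewrite (expand_det_col _ ord_max) big_ord_recr /= big_ord_recr /=.
rewrite big1; last first.
  move=> i _; rewrite !mxE /=.
  rewrite (ltn_eqF (leq_trans (ltn_ord i) (leqnSn _))).
  by rewrite a_up ?mul0r //; apply: ltn_ord.
rewrite add0r [in RHS]big_ord_recr /= -IH.
rewrite /cofactor minor_last.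
have -> : row' (widen_ord (leqnSn m.+1) ord_max) (col' ord_max (Nh m.+1 b))
          = Nh m b.
  apply/matrixP => i j; rewrite !mxE lift_max /=.
  rewrite /bump /=.
  have Hi := ltn_ord i; rewrite /= ltnS in Hi.
  have [Hle|Hlt] := leqP m i.
    have Him : nat_of_ord i = m by apply/eqP; rewrite eqn_leq Hle Hi.
    by rewrite Him add1n !eqxx.
  by rewrite add0n (ltn_eqF Hlt) (ltn_eqF (ltn_trans Hlt (ltnSn _))).
rewrite !mxE /= (ltn_eqF (ltnSn m)) a_sup eqxx.
by rewrite addnS addSn addnS !addnn !exprS -mul2n mulnC exprM sqrr_sign !mulr1 !mulN1r !opprK mul1r.

Qed.
End Hess.

Section Main.
Variable C : comNzRingType.
Variable p : nat.
Hypothesis hp : (1 <= p)%N.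
Variable phi : nat -> int -> C.
Variable s : int.

Definition aP (i j : nat) : C :=
  if j == i.+1 then -1
  else if (j <= i)%N then phic p phi (i - j).+1 (s + (i.+1)%:Z) else 0.

Lemma Phimat_Mh t : Phimat p phi t s = Mh C aP `|t - s|.
Proof. by []. Qed.

Lemma xi_nat m : xi p phi (s + m%:Z) s = \det (Mh C aP m).
Proof.
rewrite /xi Phimat_Mh (_ : absz (s + m%:Z - s)%R = m); last first.
  by rewrite addrC addKr absz_nat.
case: m => [|m].
  by rewrite addr0 ltxx eqxx det_mx00.
by rewrite ltrDl ltz_nat.
Qed.

Lemma xi_neg t : t < s -> xi p phi t s = 0.
Proof.
move=> h; rewrite /xi.
by rewrite ltNge (ltW h) /= (lt_eqF h).
Qed.

Lemma D_rec n : \det (Mh C aP n.+1) =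
  \sum_(r < n.+1) phic p phi (n - r).+1 (s + (n.+1)%:Z) * \det (Mh C aP r).
Proof.
have -> : Mh C aP n.+1 = Nh C aP n (aP n).
  by apply/matrixP => i j; rewrite !mxE; case: eqP => // ->.
rewrite Nh_det; [|by move=> i; rewrite /aP eqxx|].
  apply: eq_bigr => r _; rewrite /aP.
  by rewrite (ltn_eqF (ltn_ord r)) -ltnS ltn_ord.
move=> i j h; rewrite /aP (gtn_eqF h).
by rewrite leqNgt (ltn_trans (ltnSn i) h).
Qed.

Lemma rec_step n :
  \sum_(k < p.-1.+1) phic p phi k.+1 (s + (n.+1)%:Z) * xi p phi (s + n%:Z - k%:Z) s
  = xi p phi (s + (n.+1)%:Z) s.
Proof.
set f := fun k : nat => phic p phi k.+1 (s + (n.+1)%:Z) * xi p phi (s + n%:Z - k%:Z) s.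
rewrite (prednK hp).
change (\sum_(k < p) f k = xi p phi (s + (n.+1)%:Z) s).
have E1 : \sum_(k < p) f k = \sum_(k < p + n.+1) f k.
  rewrite (big_ord_widen (p + n.+1) f (leq_addr _ _)) big_mkcond /=.
  apply: eq_bigr => k _; case: ifP => // hk.
  by rewrite /f /phic ltnS leqNgt hk andbF mul0r.
have E2 : \sum_(k < n.+1) f k = \sum_(k < p + n.+1) f k.
  rewrite (big_ord_widen (p + n.+1) f (leq_addl _ _)) big_mkcond /=.
  apply: eq_bigr => k _; case: ifP => // hk.
  rewrite /f xi_neg ?mulr0 //.
  move/negbT: hk; rewrite -leqNgt => hk. lia.
rewrite E1 -E2 xi_nat D_rec.
rewrite -(big_mkord xpredT (fun r => phic p phi (n - r).+1 (s + (n.+1)%:Z) * \det (Mh C aP r))).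
rewrite big_rev_mkord subn0.
apply: eq_bigr => k _; rewrite /f subSS.
have hk := ltn_ord k.
rewrite subKn // (_ : s + n%:Z - k%:Z = s + (n - k)%N%:Z); first by rewrite xi_nat.
lia.
Qed.

Lemma Fmat_nat n : Fmat p phi (s + n%:Z) s = \prod_(k < n) Gamma p phi (s + n%:Z - k%:Z).
Proof.
by rewrite /Fmat (_ : absz (s + n%:Z - s)%R = n) // addrC addKr absz_nat.
Qed.

Lemma L1 n (j : 'I_p.-1.+1) : Fmat p phi (s + n%:Z) s j 0 = xi p phi (s + n%:Z - j%:Z) s.
Proof.
elim: n j => [|n IH] j.
  rewrite Fmat_nat big_ord0 addr0.
  case: j => [[|j] hj].
    by rewrite !mxE /= subr0 /xi ltxx eqxx.
  rewrite xi_neg; last by rewrite ltrBlDr ltrDl.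
  by rewrite mxE.
rewrite Fmat_nat big_ord_recl /=.
rewrite (eq_bigr (fun k : 'I_n => Gamma p phi (s + n%:Z - k%:Z))); last first.
  by move=> k _; congr (Gamma _ _ _); rewrite /bump /=; lia.
rewrite -Fmat_nat -mulmxE mxE.
rewrite (_ : s + (n.+1)%:Z - (0%N)%:Z = s + (n.+1)%:Z); last by lia.
case: j => [[|j] hj].
  under eq_bigr => k _ do rewrite IH !mxE /=.
  by rewrite rec_step subr0.
have hj' : (j < p.-1.+1)%N by apply: ltn_trans hj.
rewrite (bigD1 (Ordinal hj')) //= big1.
  rewrite !mxE /= eqxx mul1r addr0 IH /=.
  congr (xi _ _ _ _); lia.
move=> k hk; rewrite !mxE /=.
case: eqP => [hkj|]; last by rewrite mul0r.
by move: hk; rewrite -val_eqE /=; case: hkj => ->; rewrite eqxx.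
Qed.

End Main.

Theorem theorem2 (R : realType) (p : nat) (hp : (1 <= p)%N)
    (phi : nat -> int -> R[i]) (s t : int) :
  s - p%:Z + 1 <= t -> Green p phi t s = xi p phi t s.
Proof.
move=> _; rewrite /Green.
case: ifP => hst; last by rewrite /xi hst.
have ht : t = s + (absz (t - s)%R)%:Z.
  by rewrite gez0_abs ?subr_ge0 ?ltW // addrC subrK.
have := @L1 _ p hp phi s (absz (t - s)%R) ord0.
rewrite -ht => ->; congr (xi _ _ _ _); change (t - 0 = t); exact: subr0.
Qed.
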